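(* Suppose that $\mathcal T$ is a projective Fraïssé family of rooted trees whose fixed epimorphisms are confluent and include all splitting edge maps. Then the projective Fraïssé limit of $\mathcal T$ has no isolated end vertices.
   Context: A graph is a pair $(V,E)$ with $E\subseteq V^2$ reflexive and symmetric; edges $\langle a,a\rangle$ are degenerate. A topological graph has a compact, zero-dimensional, second-countable vertex set and a closed edge set. Trees: finite graphs with unique simple paths between distinct vertices; rooted trees have a root $r$ and order $x\le y$ iff the path from $r$ to $y$ contains $x$; edges written $\langle a,b\rangle$ with $a<b$. Epimorphisms between rooted trees: vertex maps sending edges to edges, surjective on vertices and edges, root to root, order-preserving. Connected: not a union of two nonempty disjoint closed sets with no edges between. Confluent: for each closed connected $Q$ in the target every component $K$ of $f^{-1}(Q)$ has $f(K)=Q$. Splitting edge map $S\to T$: $V(S)=V(T)\cup\{x\}$, $x$ new, an edge $\langle a,b\rangle$ of $T$ replaced by $\langle a,x\rangle,\langle x,b\rangle$; identity on $T$, $x\mapsto a$ or $x\mapsto b$. A projective Fraïssé family of rooted trees: a class with a fixed class of epimorphisms, countably many isomorphism types, closed under composition with identities, with the joint projection property and amalgamation property. Its projective Fraïssé limit is the unique rooted topological graph $\mathbb F=\varprojlim\{F_n,\alpha_n\}$ (members of the family, fixed bonding maps, edges coordinatewise) such that every member is an image of $\mathbb F$ under an admissible epimorphism and for admissible $f\colon\mathbb F\to A$ and fixed $g\colon B\to A$ there is admissible $h$ with $f=g\circ h$, admissible meaning $h'\circ\alpha^\infty_m$ with $h'$ fixed. A subset $A$ (with induced edges) is an arc if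 it is connected and there are $a,b\in A$ such that removing any $x\in A\setminus\{a,b\}$ disconnects it. A vertex $v$ has order $\ge n$ if there are arcs $A_1,\dots,A_n$ pairwise intersecting in $\{v\}$; end vertices have order exactly $1$. An end vertex is isolated if it belongs to a non-degenerate edge. *)

(* Defs.v *)
From mathcomp Require Import all_boot.
Set Implicit Arguments. Unset Strict Implicit. Unset Printing Implicit Defensive.

Record rtree := RTree { rt_V : finType; rt_E : rel rt_V; rt_root : rt_V }.
Arguments rt_E : clear implicits.
Arguments rt_root : clear implicits.

Definition is_graph (T : rtree) := reflexive (rt_E T) /\ symmetric (rt_E T).

Definition sedge (T : rtree) : rel (rt_V T) := fun a b => (a != b) && rt_E T a b.

Definition spath (T : rtree) (x y : rt_V T) (p : seq (rt_V T)) : bool :=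
  [&& path (@sedge T) x p, uniq (x :: p) & last x p == y].

Definition is_rtree (T : rtree) :=
  is_graph T /\ forall x y : rt_V T, x != y -> exists! p, spath x y p.

Definition tle (T : rtree) (x y : rt_V T) :=
  exists p, spath (rt_root T) y p /\ x \in rt_root T :: p.

Definition is_epi (S T : rtree) (f : rt_V S -> rt_V T) :=
  [/\ (forall a b, rt_E S a b -> rt_E T (f a) (f b)),
      (forall c, exists a, f a = c),
      (forall c d, rt_E T c d -> exists a b, [/\ rt_E S a b, f a = c & f b = d]),
      f (rt_root S) = rt_root T &
      (forall x y, tle x y -> tle (f x) (f y))].

Definition rt_iso (S T : rtree) :=
  exists f : rt_V S -> rt_V T, [/\ bijective f,
    (forall a b, rt_E S a b = rt_E T (f a) (f b)) & f (rt_root S) = rt_root T].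

(** connectedness of a subset of a finite tree (finite graphs carry the
    discrete topology, so every subset is closed) *)
Definition fconnected (T : rtree) (Q : {set rt_V T}) :=
  ~ exists A B : {set rt_V T},
      [/\ A :|: B = Q, [disjoint A & B], A != set0, B != set0 &
          forall a b, a \in A -> b \in B -> ~~ rt_E T a b].

Definition fcomponent (T : rtree) (P K : {set rt_V T}) :=
  [/\ K \subset P, K != set0, fconnected K &
      forall L : {set rt_V T}, K \subset L -> L \subset P -> fconnected L -> L = K].

Definition confluent (S T : rtree) (f : rt_V S -> rt_V T) :=
  forall Q : {set rt_V T}, fconnected Q ->
    forall K, fcomponent (f @^-1: Q) K -> f @: K = Q.

(** T is embedded in S
    by i, V(S) = i(V(T)) ∪ {x}, edge <a,b> replaced by <a,x>, <x,b>. *)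
Definition is_split (S T : rtree) (s : rt_V S -> rt_V T) (a b c : rt_V T) :=
  [/\ a != b, rt_E T a b, tle a b, (c = a \/ c = b) &
    exists (x : rt_V S) (i : rt_V T -> rt_V S),
      injective i /\
      (forall y, y = x \/ exists u, i u = y) /\
      (forall u, i u <> x) /\
      rt_root S = i (rt_root T) /\
      (forall u v, rt_E S (i u) (i v) <->
           rt_E T u v /\ ~ ((u = a /\ v = b) \/ (u = b /\ v = a))) /\
      (forall u, rt_E S x (i u) <-> (u = a \/ u = b)) /\
      (forall u, rt_E S (i u) x <-> (u = a \/ u = b)) /\
      rt_E S x x /\
      (forall u, s (i u) = u) /\
      s x = c].

Definition fixed_maps := forall S T : rtree, (rt_V S -> rt_V T) -> Prop.

Definition proj_fraisse_family (Fam : rtree -> Prop) (Fix : fixed_maps) :=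
  (forall T, Fam T -> is_rtree T) /\
  (forall S T f, Fix S T f -> [/\ Fam S, Fam T & is_epi f]) /\
  (exists Ts : nat -> rtree, (forall n, Fam (Ts n)) /\
      forall T, Fam T -> exists n, rt_iso T (Ts n)) /\
  (forall T, Fam T -> Fix T T id) /\
  (forall R S T (f : rt_V S -> rt_V T) (g : rt_V R -> rt_V S),
      Fix S T f -> Fix R S g -> Fix R T (f \o g)) /\
  (forall A B, Fam A -> Fam B ->
      exists C (f : rt_V C -> rt_V A) (g : rt_V C -> rt_V B),
        [/\ Fam C, Fix C A f & Fix C B g]) /\
  (forall A B C (f : rt_V B -> rt_V A) (g : rt_V C -> rt_V A),
      Fix B A f -> Fix C A g ->
      exists D (f' : rt_V D -> rt_V B) (g' : rt_V D -> rt_V C),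
        [/\ Fam D, Fix D B f', Fix D C g' & forall x, f (f' x) = g (g' x)]).

Definition LV (F : nat -> rtree) := forall n, rt_V (F n).

Definition inlim (F : nat -> rtree) (alpha : forall n, rt_V (F n.+1) -> rt_V (F n))
  (x : LV F) := forall n, alpha n (x n.+1) = x n.

Definition limE (F : nat -> rtree) (x y : LV F) := forall n, rt_E (F n) (x n) (y n).

(** A is relatively closed in Q (product topology of the discrete F n) *)
Definition relclosed (F : nat -> rtree) (Q A : LV F -> Prop) :=
  forall x, Q x -> (forall n, exists y, A y /\ forall m, m <= n -> y m = x m) -> A x.

Definition lconnected (F : nat -> rtree) (Q : LV F -> Prop) :=
  ~ exists A B : LV F -> Prop,
      (forall x, Q x <-> A x \/ B x) /\ (forall x, ~ (A x /\ B x)) /\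
      (exists a, A a) /\ (exists b, B b) /\
      relclosed Q A /\ relclosed Q B /\
      (forall a b, A a -> B b -> ~ limE a b).

Definition is_arc (F : nat -> rtree) (Q : LV F -> Prop) :=
  lconnected Q /\
  exists a b, [/\ Q a, Q b, a <> b &
    forall x, Q x -> x <> a -> x <> b -> ~ lconnected (fun y => Q y /\ y <> x)].

Definition order_ge (F : nat -> rtree) (alpha : forall n, rt_V (F n.+1) -> rt_V (F n))
  (v : LV F) (n : nat) :=
  exists A : nat -> (LV F -> Prop), forall i, i < n ->
    [/\ (forall x, A i x -> inlim alpha x), is_arc (A i), A i v &
        forall j, j < n -> i <> j -> forall x, A i x -> A j x -> x = v].

Definition end_vertex (F : nat -> rtree) (alpha : forall n, rt_V (F n.+1) -> rt_V (F n))
  (v : LV F) := [/\ inlim alpha v, order_ge alpha v 1 & ~ order_ge alpha v 2].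

Definition isolated_end_vertex (F : nat -> rtree)
  (alpha : forall n, rt_V (F n.+1) -> rt_V (F n)) (v : LV F) :=
  end_vertex alpha v /\ exists w, [/\ inlim alpha w, w <> v & limE v w].

Definition admissible (Fix : fixed_maps) (F : nat -> rtree)
  (alpha : forall n, rt_V (F n.+1) -> rt_V (F n)) (A : rtree) (h : LV F -> rt_V A) :=
  exists m (h' : rt_V (F m) -> rt_V A),
    Fix (F m) A h' /\ forall x, inlim alpha x -> h x = h' (x m).

Definition is_proj_fraisse_limit (Fam : rtree -> Prop) (Fix : fixed_maps)
  (F : nat -> rtree) (alpha : forall n, rt_V (F n.+1) -> rt_V (F n)) :=
  [/\ (forall n, Fam (F n)),
      (forall n, Fix (F n.+1) (F n) (alpha n)),
      (forall A, Fam A -> exists h : LV F -> rt_V A, admissible Fix alpha h) &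
      (forall A B (f : LV F -> rt_V A) (g : rt_V B -> rt_V A),
          admissible Fix alpha f -> Fix B A g ->
          exists h : LV F -> rt_V B, admissible Fix alpha h /\
            forall x, inlim alpha x -> f x = g (h x))].

(* Main.v *)
Require Import Defs.
From mathcomp Require Import all_boot zify.
From Stdlib Require Import Classical ClassicalEpsilon FunctionalExtensionality.
Set Implicit Arguments. Unset Strict Implicit. Unset Printing Implicit Defensive.

Lemma cross (X Y : nat -> Prop) lo hi : lo <= hi -> X lo -> Y hi ->
  (forall l, lo <= l <= hi -> X l \/ Y l) ->
  exists l, [/\ lo <= l <= hi, X l & (Y l \/ (l < hi /\ Y l.+1))].
Proof.
move=> Hlh; move Hd: (hi - lo) => d; elim: d lo Hlh Hd => [|d IH] lo Hlh Hd HX HY Hc.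
  have e : lo = hi by apply/eqP; rewrite eqn_leq Hlh -subn_eq0 Hd.
  by subst; exists hi; rewrite leqnn; split => //; left.
have Hlt : lo < hi by rewrite -subn_gt0 Hd.
case: (classic (Y lo)) => Hy; first by exists lo; rewrite leqnn Hlh; split => //; left.
case: (Hc lo.+1); first by rewrite ltnW // Hlt.
  move=> HX1.
  have Hd' : hi - lo.+1 = d by rewrite subnS Hd.
  have Hc' : forall l, lo.+1 <= l <= hi -> X l \/ Y l.
    by move=> l /andP [H1 H2]; apply: Hc; rewrite H2 ltnW.
  have [l [H1 H2 H3]] := IH lo.+1 Hlt Hd' HX1 HY Hc'.
  by exists l; split => //; case/andP: H1 => H1 ->; rewrite ltnW.
by move=> HY1; exists lo; rewrite leqnn ltnW //; split => //; right.
Qed.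

Lemma disjP (V : finType) (A B : {set V}) : (forall x, x \in A -> x \in B -> False) -> [disjoint A & B].
Proof.
move=> H; rewrite disjoints_subset; apply/subsetP => x Hx; rewrite inE; apply/negP => Hb.
exact: H x Hx Hb.
Qed.

Section Tree.
Variable T : rtree.
Hypothesis HT : is_rtree T.
Local Notation V := (rt_V T).
Local Notation r := (rt_root T).
Local Notation E := (rt_E T).

Lemma Erefl x : E x x.
Proof. by case: HT => [[H _] _]. Qed.
Lemma Esym x y : E x y = E y x.
Proof. by case: HT => [[_ H] _]. Qed.

Lemma spath_nil p : spath r r p -> p = [::].
Proof.
case: p => // y p /and3P [_ Hu /eqP Hl].
move: Hu; rewrite cons_uniq => /andP [Hn _].
by move: Hn; rewrite -{1}Hl /= mem_last.
Qed.

Lemma spath_uniq y p q : spath r y p -> spath r y q -> p = q.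
Proof.
case: (eqVneq r y) => [<-|ne] Hp Hq; first by rewrite (spath_nil Hp) (spath_nil Hq).
case: HT => _ /(_ _ _ ne) [p0 [_ Hu]].
by rewrite -(Hu _ Hp) -(Hu _ Hq).
Qed.

Lemma spath_ex y : exists p, spath r y p.
Proof.
case: (eqVneq r y) => [<-|ne]; first by exists [::]; rewrite /spath /= eqxx.
by case: HT => _ /(_ _ _ ne) [p [Hp _]]; exists p.
Qed.

Definition rp y := xchoose (spath_ex y).
Lemma rpP y : spath r y (rp y).
Proof. exact: xchooseP. Qed.

Lemma tleE (x y : V) : tle x y <-> x \in r :: rp y.
Proof.
split; first by case=> p [Hp Hx]; rewrite -(spath_uniq Hp (rpP y)).
by move=> H; exists (rp y); split => //; exact: rpP.
Qed.

Definition par y := last r (belast r (rp y)).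

Lemma rp_root : rp r = [::].
Proof. exact: spath_nil (rpP r). Qed.

Lemma par_root : par r = r.
Proof. by rewrite /par rp_root. Qed.

Lemma par_spec y : y != r -> rp y = rcons (rp (par y)) y /\ sedge (par y) y.
Proof.
move=> ne.
have Hs := rpP y.
rewrite /par.
case/lastP E1 : (rp y) Hs => [|q z] Hs.
  by move: Hs => /and3P [_ _ /eqP Hl]; rewrite /= in Hl; rewrite Hl eqxx in ne.
move: Hs => /and3P [Hp Hu /eqP Hl].
rewrite last_rcons in Hl; subst z.
rewrite belast_rcons /=.
have Hq : spath r (last r q) q.
  apply/and3P; split.
  - by move: Hp; rewrite rcons_path => /andP [].
  - by move: Hu; rewrite -rcons_cons rcons_uniq => /andP [].
  - by [].
rewrite -(spath_uniq Hq (rpP _)); split => //.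
by move: Hp; rewrite rcons_path => /andP [].
Qed.

Lemma tle_par (x y : V) : tle x y <-> x = y \/ (y != r /\ tle x (par y)).
Proof.
case: (eqVneq y r) => [->|ne].
  split; first by move/tleE; rewrite rp_root inE => /eqP ->; left.
  by case=> [->|[]]; [apply/tleE; rewrite rp_root mem_head|by case/negP].
have [e _] := par_spec ne.
split.
  move/tleE; rewrite e -rcons_cons mem_rcons inE => /orP [/eqP ->|H]; first by left.
  by right; split => //; apply/tleE.
by case=> [->|[_ /tleE H]]; apply/tleE; rewrite e -rcons_cons mem_rcons inE ?eqxx // H orbT.
Qed.

Definition dep y := size (rp y).

Lemma dep_par y : y != r -> dep (par y) < dep y.
Proof. by move=> ne; rewrite /dep (proj1 (par_spec ne)) size_rcons. Qed.

Lemma iter_par_root n : iter n par r = r.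
Proof. by elim: n => //= n ->; rewrite par_root. Qed.

Lemma tle_iter (x y : V) : tle x y <-> exists n, x = iter n par y.
Proof.
split.
  move: {2}(dep y) (leqnn (dep y)) => d; elim: d x y => [|d IH] x y.
    rewrite leqn0 => Hd H.
    have Hy : y = r.
      by apply/eqP; apply: contraT => ne; move: (dep_par ne); rewrite (eqP Hd).
    subst y; case/tle_par: H => [->|[]]; [by exists 0|by rewrite eqxx].
  move=> Hd; case/tle_par => [->|[ne H]]; first by exists 0.
  have Hd' : dep (par y) <= d by rewrite -ltnS (leq_trans (dep_par ne)).
  case: (IH _ _ Hd' H) => n ->; exists n.+1; by rewrite iterSr.
case=> n ->; elim: n y => [|n IH] y; first by apply/tle_par; left.
rewrite iterSr.
case: (eqVneq y r) => [->|ne]; first by rewrite par_root; apply: IH.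
by apply/tle_par; right; split => //; apply: IH.
Qed.

Lemma tle_refl (x : V) : tle x x.
Proof. by apply/tle_iter; exists 0. Qed.

Lemma tle_trans (x y z : V) : tle x y -> tle y z -> tle x z.
Proof.
move=> /tle_iter [n ->] /tle_iter [m ->]; apply/tle_iter; exists (n + m).
by rewrite iterD.
Qed.

Lemma tle_root (y : V) : tle r y.
Proof. by apply/tleE; rewrite mem_head. Qed.

Lemma dep_iter n y : dep (iter n par y) <= dep y.
Proof.
elim: n y => // n IH y; rewrite iterSr.
case: (eqVneq y r) => [->|ne]; first by rewrite par_root iter_par_root.
by apply: leq_trans (IH _) (ltnW (dep_par ne)).
Qed.

Lemma tle_anti (x y : V) : tle x y -> tle y x -> x = y.
Proof.
move=> /tle_iter [n Hx] /tle_iter [m Hy].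
case: n Hx => [|n] Hx; first by [].
case: (eqVneq y r) => [Hr|ne].
  by rewrite Hx Hr iter_par_root.
have : dep x < dep y.
  rewrite Hx iterSr; apply: leq_ltn_trans (dep_iter _ _) (dep_par ne).
by rewrite Hy ltnNge dep_iter.
Qed.

Lemma tle_total (x y b : V) : tle x b -> tle y b -> tle x y \/ tle y x.
Proof.
move=> /tle_iter [n ->] /tle_iter [m ->].
case: (leqP n m) => H.
  right; apply/tle_iter; exists (m - n); by rewrite -iterD subnK.
left; apply/tle_iter; exists (n - m); by rewrite -iterD subnK // ltnW.
Qed.

Lemma tle_par_self (y : V) : tle (par y) y.
Proof. by apply/tle_iter; exists 1. Qed.

Lemma E_par y : E (par y) y.
Proof.
case: (eqVneq y r) => [->|ne]; first by rewrite par_root Erefl.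
by case/andP: (proj2 (par_spec ne)).
Qed.

Lemma par_neq y : y != r -> par y != y.
Proof. by move=> ne; case/andP: (proj2 (par_spec ne)). Qed.

Lemma adj_par x y : E x y -> x != y -> y = par x \/ x = par y.
Proof.
move=> Hxy ne.
have key : forall a b, E a b -> a != b -> a \notin r :: rp b -> a = par b -> False -> True by [].
case Ha : (x \in r :: rp y); last first.
  left.
  have Hs : spath r x (rcons (rp y) x).
    case/and3P: (rpP y) => Hp Hu Hl.
    apply/and3P; split.
    - by rewrite rcons_path Hp /= /sedge (eqP Hl) eq_sym ne Esym.
    - by rewrite -rcons_cons rcons_uniq Ha Hu.
    - by rewrite last_rcons.
  rewrite /par -(spath_uniq Hs (rpP x)) belast_rcons /=.
  by case/and3P: (rpP y) => _ _ /eqP.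
case Hb : (y \in r :: rp x); last first.
  right.
  have Hs : spath r y (rcons (rp x) y).
    case/and3P: (rpP x) => Hp Hu Hl.
    apply/and3P; split.
    - by rewrite rcons_path Hp /= /sedge (eqP Hl) ne.
    - by rewrite -rcons_cons rcons_uniq Hb Hu.
    - by rewrite last_rcons.
  rewrite /par -(spath_uniq Hs (rpP y)) belast_rcons /=.
  by case/and3P: (rpP x) => _ _ /eqP.
have := tle_anti (proj2 (tleE x y) Ha) (proj2 (tleE y x) Hb).
by move=> H; rewrite H eqxx in ne.
Qed.

Lemma adj_tle x y : E x y -> tle x y \/ tle y x.
Proof.
move=> H; case: (eqVneq x y) => [->|ne]; first by left; apply: tle_refl.
case: (adj_par H ne) => ->; [right|left]; apply: tle_par_self.
Qed.

Lemma tle_between (x y z : V) : tle x y -> tle y z -> x <> y -> y <> z -> ~~ E x z.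
Proof.
move=> Hxy Hyz nxy nyz; apply/negP => Hxz.
have Hxz' := tle_trans Hxy Hyz.
have nxz : x != z by apply/eqP => e; subst z; apply: nxy; exact: tle_anti Hxy Hyz.
case: (adj_par Hxz nxz) => e.
  have : tle z x by rewrite e; apply: tle_par_self.
  by move=> H; apply: nxy; apply: (tle_anti Hxy); apply: tle_trans Hyz H.
have nzr : z != r by apply/eqP => er; apply: nyz; apply: (tle_anti Hyz); rewrite er; apply: tle_root.
case/tle_par: Hyz => [//|[_ H]].
by apply: nxy; apply: (tle_anti Hxy); rewrite e.
Qed.

Lemma up_cross (v z1 z2 : V) : E z1 z2 -> tle v z1 -> ~ tle v z2 -> z1 = v /\ z2 = par v.
Proof.
move=> H H1 H2.
have ne : z1 != z2 by apply/eqP => e; subst; apply: H2.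
case: (adj_par H ne) => e.
  have : z1 = v.
    apply/eqP; apply: contraT => nv.
    case/tle_par: H1 => [e'|[_ H']]; first by rewrite e' eqxx in nv.
    by case: H2; rewrite e.
  by move=> e1; subst; split.
by exfalso; apply: H2; apply: tle_trans H1 _; rewrite e; apply: tle_par_self.
Qed.


Lemma walk_cross (X Y : V -> Prop) b n :
  (forall l, l <= n -> X (iter l par b) \/ Y (iter l par b)) -> X b -> Y (iter n par b) ->
  exists u w, [/\ X u, Y w & E u w].
Proof.
move=> Hc Hb Hn.
have [|l [/andP [_ Hl] H1 H2]] := @cross (fun l => X (iter l par b)) (fun l => Y (iter l par b)) 0 n (leq0n n) Hb Hn.
  by move=> l /andP [_ Hl]; apply: Hc.
case: H2 => [H2|[_ H2]]; first by exists (iter l par b), (iter l par b); split => //; apply: Erefl.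
exists (iter l par b), (iter l.+1 par b); split => //.
by rewrite iterS Esym E_par.
Qed.

Definition upset (x : V) : {set V} := [set y | x \in r :: rp y].

Lemma upsetP x y : reflect (tle x y) (y \in upset x).
Proof. by rewrite inE; apply: (iffP idP) => /tleE. Qed.

Lemma tle_iter_between b n l : l <= n -> tle (iter n par b) (iter l par b).
Proof. by move=> H; apply/tle_iter; exists (n - l); rewrite -iterD subnK. Qed.

Lemma tle_iter_le b l : tle (iter l par b) b.
Proof. by apply/tle_iter; exists l. Qed.

Lemma upset_conn x : fconnected (upset x).
Proof.
move=> [A [B [HU Hd HA HB HE]]].
have Hx : x \in A :|: B by rewrite HU; apply/upsetP; apply: tle_refl.
have Hwalk : forall b, b \in upset x -> exists n, x = iter n par b /\
    forall l, l <= n -> iter l par b \in A :|: B.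
  move=> b /upsetP /tle_iter [n Hn]; exists n; split => // l Hl; rewrite HU.
  by apply/upsetP; rewrite Hn; apply: tle_iter_between.
case/setUP: Hx => Hx.
  case/set0Pn: HB => b Hb.
  have Hb' : b \in upset x by rewrite -HU inE Hb orbT.
  case: (Hwalk b Hb') => n [Hn Hl].
  have Hc : forall l, l <= n -> iter l par b \in B \/ iter l par b \in A.
    by move=> l /Hl /setUP [] ?; [right|left].
  have Hy : iter n par b \in A by rewrite -Hn.
  have [u [w [Hu Hw Huw]]] := @walk_cross (fun z => z \in B) (fun z => z \in A) b n Hc Hb Hy.
  by move: (HE _ _ Hw Hu); rewrite Esym Huw.
case/set0Pn: HA => a Ha.
have Ha' : a \in upset x by rewrite -HU inE Ha.
case: (Hwalk a Ha') => n [Hn Hl].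
have Hc : forall l, l <= n -> iter l par a \in A \/ iter l par a \in B.
  by move=> l /Hl /setUP [] ?; [left|right].
have Hy : iter n par a \in B by rewrite -Hn.
have [u [w [Hu Hw Huw]]] := @walk_cross (fun z => z \in A) (fun z => z \in B) a n Hc Ha Hy.
by move: (HE _ _ Hu Hw); rewrite Huw.
Qed.

Lemma conn_up (K : {set V}) v : fconnected K -> v \in K -> par v \notin K ->
  forall y, y \in K -> tle v y.
Proof.
move=> HK Hv Hp y Hy; apply: NNPP => Hny; apply: HK.
exists [set z in K | v \in r :: rp z], [set z in K | v \notin r :: rp z]; split.
- apply/setP => z; rewrite in_setU !in_set; by case: (z \in K); case: (v \in _).
- by apply: disjP => z; rewrite !in_set => /andP [_ ->] /andP [_].
- by apply/set0Pn; exists v; rewrite in_set Hv; apply/tleE; apply: tle_refl.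
- apply/set0Pn; exists y; rewrite in_set Hy /=; apply/negP => /tleE; exact: Hny.
- move=> a b; rewrite !in_set => /andP [Ha /tleE Hva] /andP [Hb Hvb]; apply/negP => Hab.
  have [_ e] := up_cross Hab Hva (fun H => negP Hvb (proj1 (tleE _ _) H)).
  by rewrite -e Hb in Hp.
Qed.

Lemma path_cross (e : rel V) (X Y : V -> Prop) x p :
  (forall a b, e a b -> E a b) -> path e x p ->
  (forall z, z \in x :: p -> X z \/ Y z) -> X x -> Y (last x p) ->
  exists u w, [/\ X u, Y w & E u w].
Proof.
move=> HeE; elim: p x => [|y p IH] x /=.
  by move=> _ _ Hx Hy; exists x, x; split => //; apply: Erefl.
move=> /andP [Hxy Hp] Hc Hx Hl.
case: (Hc y); first by rewrite !inE eqxx orbT.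
  move=> HXy; apply: (IH y Hp) => // z Hz; apply: Hc; by rewrite inE Hz orbT.
by move=> HYy; exists x, y; split => //; apply: HeE.
Qed.

Lemma comp_ex (P : {set V}) v : v \in P -> exists K, fcomponent P K /\ v \in K.
Proof.
move=> Hv.
pose e := [rel a b | [&& a \in P, b \in P & E a b]].
have HeE : forall a b, e a b -> E a b by move=> a b /and3P [].
pose K := [set z | connect e v z].
have HvK : v \in K by rewrite inE connect0.
have HKP : forall z, z \in K -> z \in P.
  move=> z; rewrite inE => /connectP [p Hp ->].
  case/lastP: p Hp => [|q y] //; rewrite rcons_path last_rcons => /andP [_].
  by case/and3P.
exists K; split => //; split.
- by apply/subsetP => z /HKP.
- by apply/set0Pn; exists v.
- move=> [A [B [HU Hd HA HB HE]]].
  have HvAB : v \in A :|: B by rewrite HU.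
  have Hin : forall z, z \in K -> z \in A \/ z \in B by move=> z; rewrite -HU => /setUP.
  case/setUP: HvAB => HvX.
    case/set0Pn: HB => b Hb.
    have : b \in K by rewrite -HU inE Hb orbT.
    rewrite inE => /connectP [p Hp Hl].
    have Hc : forall z, z \in v :: p -> z \in A \/ z \in B.
      by move=> z /(path_connect Hp) Hz; apply: Hin; rewrite inE.
    have Hy : last v p \in B by rewrite -Hl.
    have [u [w [Hu Hw Huw]]] := @path_cross e (fun z => z \in A) (fun z => z \in B) v p HeE Hp Hc HvX Hy.
    by move: (HE _ _ Hu Hw); rewrite Huw.
  case/set0Pn: HA => a Ha.
  have : a \in K by rewrite -HU inE Ha.
  rewrite inE => /connectP [p Hp Hl].
  have Hc : forall z, z \in v :: p -> z \in B \/ z \in A.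
    by move=> z /(path_connect Hp) Hz; case: (Hin z); rewrite ?inE //; [right|left].
  have Hy : last v p \in A by rewrite -Hl.
  have [u [w [Hu Hw Huw]]] := @path_cross e (fun z => z \in B) (fun z => z \in A) v p HeE Hp Hc HvX Hy.
  by move: (HE _ _ Hw Hu); rewrite Esym Huw.
- move=> L HKL HLP HL; apply/eqP; rewrite eqEsubset; apply/andP; split; last by [].
  apply/subsetP => z Hz; apply: NNPP => HzK; apply: HL.
  exists K, (L :\: K); split.
  + apply/setP => y; rewrite in_setU in_setD; case Hy: (y \in K) => /=; last by [].
    by rewrite (subsetP HKL).
  + by apply: disjP => y Hy; rewrite in_setD Hy.
  + by apply/set0Pn; exists v.
  + by apply/set0Pn; exists z; rewrite in_setD Hz andbT; apply/negP.
  + move=> a b Ha; rewrite in_setD => /andP [Hb' Hb]; apply/negP => Hab.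
    have : b \in K.
      rewrite inE; apply: connect_trans (_ : connect e v a) _; first by rewrite -inE.
      apply: connect1; rewrite /= Hab andbT.
      by rewrite !(subsetP HLP) // (subsetP HKL).
    by rewrite (negPf Hb').
Qed.

End Tree.

Lemma seg_lift (S T : rtree) (HS : is_rtree S) (HT : is_rtree T) (f : rt_V S -> rt_V T) :
  (forall a b, rt_E S a b -> rt_E T (f a) (f b)) ->
  (forall x y, tle x y -> tle (f x) (f y)) ->
  forall a' b' y, tle a' b' -> tle (f a') y -> tle y (f b') ->
  exists y', [/\ tle a' y', tle y' b' & f y' = y].
Proof.
move=> HE Ho a' b' y Hab Hay Hyb.
case: (classic (f a' = y)) => Hfa.
  by exists a'; split => //; apply: (tle_refl HS).
have Hny : ~ tle y (f a') by move=> H; apply: Hfa; apply: (tle_anti HT).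
case/(tle_iter HS): Hab => n Hn.
have Hy2 : ~ tle y (f (iter n (par HS) b')) by rewrite -Hn.
have [l [/andP [_ Hl] H1 H2]] := @cross (fun l => tle y (f (iter l (par HS) b')))
   (fun l => ~ tle y (f (iter l (par HS) b'))) 0 n (leq0n n) Hyb Hy2 (fun l _ => classic _).
case: H2 => [//|[_ H2]].
have Hedge : rt_E T (f (iter l (par HS) b')) (f (iter l.+1 (par HS) b')).
  by apply: HE; rewrite iterS (Esym HS) (E_par HS).
have [e _] := up_cross HT Hedge H1 H2.
exists (iter l (par HS) b'); split => //.
- by rewrite Hn; apply: (tle_iter_between HS).
- exact: (tle_iter_le HS).
Qed.

Section Konig.
Variable G : nat -> finType.
Variable beta : forall n, G n.+1 -> G n.

Definition coh (j : nat) (t : forall n, G n) := forall l, l < j -> beta (t l.+1) = t l.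
Definition thread (t : forall n, G n) := forall n, beta (t n.+1) = t n.

Definition upd (t : forall n, G n) M (z : G M) : forall n, G n :=
  fun n => match eq_comparable M n with left e => eq_rect M G z n e | right _ => t n end.

Lemma upd_eq t M (z : G M) : upd t z M = z.
Proof.
rewrite /upd; case: (eq_comparable M M) => [e|]; last by [].
by rewrite (eq_axiomK e).
Qed.

Lemma upd_neq t M (z : G M) n : M <> n -> upd t z n = t n.
Proof. by rewrite /upd; case: (eq_comparable M n). Qed.

Lemma coh_le j j' t : coh j t -> j' <= j -> coh j' t.
Proof. by move=> H Hj l Hl; apply: H; apply: leq_trans Hl Hj. Qed.

Lemma coh_upd j t (z : G j.+1) : coh j t -> beta z = t j -> coh j.+1 (upd t z).
Proof.
move=> Hc Hz l; rewrite ltnS leq_eqVlt => /orP [/eqP ->|Hl].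
  rewrite upd_eq upd_neq; first by [].
  by move=> e; move: (leqnn j); rewrite -{1}e ltnn.
rewrite !upd_neq; first by apply: Hc.
- by move=> e; lia.
- by move=> e; lia.
Qed.

Lemma thread_coh u j : thread u -> coh j u.
Proof. by move=> H l _; apply: H. Qed.

Fixpoint pj d n : G (d + n) -> G n :=
  match d return G (d + n) -> G n with 0 => fun z => z | d'.+1 => fun z => @pj d' n (@beta (d' + n) z) end.
Arguments pj : clear implicits.

Lemma coh_pj t d n : coh (d + n) t -> t n = pj d n (t (d + n)).
Proof.
elim: d => [|d IH] // Hc /=.
rewrite (Hc (d + n)) ?addSn ?ltnS ?leqnn //.
by apply: IH; apply: coh_le Hc _; rewrite leq_add2r.
Qed.

Lemma thread_pj u d n : thread u -> u n = pj d n (u (d + n)).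
Proof. by move=> H; apply: coh_pj; apply: thread_coh. Qed.

Definition Anch k (Phi : G k -> Prop) j (z : G j) :=
  k <= j -> forall t, coh j t -> t j = z -> Phi (t k).

Lemma anch_mono (k : nat) (Phi : G k -> Prop) (j : nat) (z : G j.+1) : Anch Phi z -> Anch Phi (beta z).
Proof.
move=> H Hk t Hc Ht.
have Hc' := coh_upd Hc (esym Ht).
have := H (leq_trans Hk (leqnSn j)) _ Hc' (upd_eq _ _).
rewrite upd_neq //; move=> e; lia.
Qed.

Lemma anch_pj k (Phi : G k -> Prop) d (z : G (d + k)) : Phi (pj d k z) -> Anch Phi z.
Proof. by move=> H _ t Hc Ht; rewrite (coh_pj Hc) Ht. Qed.

Lemma anch_lt k (Phi : G k -> Prop) j (z : G j) : j < k -> Anch Phi z.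
Proof. by move=> H H'; move: (leq_trans H H'); rewrite ltnn. Qed.

Lemma anch_thread k (Phi : G k -> Prop) u : thread u -> Anch Phi (u k) -> Phi (u k).
Proof. by move=> H A; apply: (A (leqnn k) u) => //; apply: thread_coh. Qed.

Section K.
Variable P : forall n, G n -> Prop.
Hypothesis Pmono : forall n (y : G n.+1), P y -> P (beta y).
Hypothesis Pne : forall n, exists y : G n, P y.

Definition dflt n : G n := proj1_sig (constructive_indefinite_description _ (Pne n)).

Lemma part_exists M (z : G M) : exists t, coh M t /\ t M = z.
Proof.
elim: M z => [|M IH] z.
  by exists (upd dflt z); split; [by []|apply: upd_eq].
case: (IH (beta z)) => t [Hc Ht].
exists (upd t z); split; [by apply: coh_upd|apply: upd_eq].
Qed.

Lemma Pdown M t : coh M t -> P (t M) -> forall l, l <= M -> P (t l).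
Proof.
move=> Hc HP l Hl.
have H : forall d, d + l <= M -> P (t (d + l)) -> P (t l).
  elim=> [|d IH] // Hd Hp.
  have Hp' := @Pmono (d + l) (t (d + l).+1) Hp.
  rewrite (Hc (d + l)) in Hp'; last by rewrite -addSn.
  by apply: IH => //; apply: ltnW; rewrite -addSn.
by apply: (H (M - l)); rewrite subnK.
Qed.

Definition R n (y : G n) :=
  forall M, n <= M -> exists t, [/\ coh M t, P (t M) & t n = y].

Lemma R_P n (y : G n) : R y -> P y.
Proof. by move/(_ n (leqnn n)) => [t [_ HP <-]]. Qed.

Lemma stepA n : exists y : G n, R y.
Proof.
apply: NNPP => H.
have H1 : forall y : G n, exists M, n <= M /\ ~ exists t, [/\ coh M t, P (t M) & t n = y].
  move=> y; apply: NNPP => H2; apply: H; exists y => M HM; apply: NNPP => H3.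
  by apply: H2; exists M.
pose Mf y := proj1_sig (constructive_indefinite_description _ (H1 y)).
have HMf y : n <= Mf y /\ ~ exists t, [/\ coh (Mf y) t, P (t (Mf y)) & t n = y].
  exact: proj2_sig (constructive_indefinite_description _ (H1 y)).
pose M := maxn n (\max_(y : G n) Mf y).
case: (Pne M) => z Hz.
case: (part_exists z) => t [Hc Ht].
have HyM : Mf (t n) <= M by rewrite leq_max (leq_bigmax (t n)) orbT.
apply: (proj2 (HMf (t n))); exists t; split => //.
- exact: coh_le Hc HyM.
- by apply: (Pdown Hc) => //; rewrite Ht.
Qed.

Lemma stepB n (y : G n) : R y -> exists y' : G n.+1, R y' /\ beta y' = y.
Proof.
move=> Hy; apply: NNPP => H.
have H1 : forall y' : G n.+1, exists M, n.+1 <= M /\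
    (beta y' = y -> ~ exists t, [/\ coh M t, P (t M) & t n.+1 = y']).
  move=> y'; case: (classic (beta y' = y)) => Hb; last by exists n.+1; split.
  apply: NNPP => H2; apply: H; exists y'; split => // M HM; apply: NNPP => H3.
  by apply: H2; exists M; split.
pose Mf y' := proj1_sig (constructive_indefinite_description _ (H1 y')).
have HMf y' : n.+1 <= Mf y' /\
    (beta y' = y -> ~ exists t, [/\ coh (Mf y') t, P (t (Mf y')) & t n.+1 = y']).
  exact: proj2_sig (constructive_indefinite_description _ (H1 y')).
pose M := maxn n.+1 (\max_(y' : G n.+1) Mf y').
have [t [Hc HP Ht]] := Hy M (leq_trans (leqnSn n) (leq_maxl _ _)).
have Hb : beta (t n.+1) = y by rewrite -Ht; apply: Hc; apply: leq_maxl.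
have HyM : Mf (t n.+1) <= M by rewrite leq_max (leq_bigmax (t n.+1)) orbT.
apply: (proj2 (HMf (t n.+1)) Hb); exists t; split => //.
- exact: coh_le Hc HyM.
- by apply: (Pdown Hc).
Qed.

Fixpoint seqR (n : nat) : {y : G n | R y} :=
  match n with
  | 0 => exist _ _ (proj2_sig (constructive_indefinite_description _ (stepA 0)))
  | n'.+1 => let s := seqR n' in
     let c := constructive_indefinite_description _ (stepB (proj2_sig s)) in
     exist _ (proj1_sig c) (proj1 (proj2_sig c))
  end.

Lemma konig : exists u : forall n, G n, thread u /\ forall n, P (u n).
Proof.
exists (fun n => proj1_sig (seqR n)); split.
  move=> n /=.
  exact: proj2 (proj2_sig (constructive_indefinite_description _ (stepB (proj2_sig (seqR n))))).
by move=> n; apply: R_P; apply: proj2_sig.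
Qed.

End K.
End Konig.

Section Limit.
Variable F : nat -> rtree.
Local Unset Implicit Arguments.
Variable alpha : forall n, rt_V (F n.+1) -> rt_V (F n).
Local Set Implicit Arguments.
Hypothesis HF : forall n, is_rtree (F n).
Hypothesis Hepi : forall n, is_epi (alpha n).

Local Notation G := (fun n => rt_V (F n)).

Lemma aE n a b : rt_E (F n.+1) a b -> rt_E (F n) (alpha n a) (alpha n b).
Proof. by case: (Hepi n) => H _ _ _ _; apply: H. Qed.
Lemma aT n (x y : rt_V (F n.+1)) : tle x y -> tle (alpha n x) (alpha n y).
Proof. by case: (Hepi n) => _ _ _ _ H; apply: H. Qed.

Definition lle (x y : LV F) := forall n, tle (x n) (y n).

Lemma down_tle x y n l : inlim alpha x -> inlim alpha y -> tle (x n) (y n) -> l <= n -> tle (x l) (y l).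
Proof.
move=> Hx Hy H Hl; rewrite -(subnK Hl) in H.
elim: (n - l) H {Hl} => [|d IH] // H; apply: IH.
by have := aT H; rewrite Hx Hy.
Qed.

Lemma down_eq (x y : LV F) n l : inlim alpha x -> inlim alpha y -> x n = y n -> l <= n -> x l = y l.
Proof.
move=> Hx Hy H Hl; rewrite -(subnK Hl) in H.
elim: (n - l) H {Hl} => [|d IH] // H; apply: IH.
by rewrite -Hx -Hy H.
Qed.

Lemma up_neq (x y : LV F) n l : inlim alpha x -> inlim alpha y -> x l <> y l -> l <= n -> x n <> y n.
Proof. by move=> Hx Hy H Hl e; apply: H; apply: (down_eq Hx Hy e). Qed.

Lemma neq_ex (x y : LV F) : x <> y -> exists n, x n <> y n.
Proof.
move=> H; apply: NNPP => H'; apply: H; apply: functional_extensionality_dep => n.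
by apply: NNPP => H2; apply: H'; exists n.
Qed.

Lemma lle_anti x y : lle x y -> lle y x -> x = y.
Proof.
move=> H1 H2; apply: functional_extensionality_dep => n.
exact: (tle_anti (HF n) (H1 n) (H2 n)).
Qed.

Lemma lle_refl x : lle x x.
Proof. by move=> n; apply: (tle_refl (HF n)). Qed.

Lemma lle_trans x y z : lle x y -> lle y z -> lle x z.
Proof. by move=> H1 H2 n; apply: (tle_trans (HF n) (H1 n) (H2 n)). Qed.

Lemma lle_total x y b : inlim alpha x -> inlim alpha y -> lle x b -> lle y b -> lle x y \/ lle y x.
Proof.
move=> Hx Hy Hxb Hyb.
case: (classic (lle x y)) => H; [by left|right].
have [n0 Hn0] : exists n0, ~ tle (x n0) (y n0).
  by apply: NNPP => H'; apply: H => n; apply: NNPP => H2; apply: H'; exists n.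
move=> n; case: (leqP n n0) => Hn.
  case: (tle_total (HF n0) (Hxb n0) (Hyb n0)) => // H0.
  exact: down_tle Hy Hx H0 Hn.
case: (tle_total (HF n) (Hxb n) (Hyb n)) => // H0.
by exfalso; apply: Hn0; apply: down_tle Hx Hy H0 (ltnW Hn).
Qed.

Lemma adj_lle x y m : inlim alpha x -> inlim alpha y -> limE x y -> x m <> y m ->
  tle (x m) (y m) -> lle x y.
Proof.
move=> Hx Hy HE Hne Hm n; case: (leqP n m) => Hn; first exact: down_tle Hx Hy Hm Hn.
have Hne' : x n <> y n by apply: up_neq Hx Hy Hne (ltnW Hn).
case: (adj_tle (HF n) (HE n)) => // H.
have := down_tle Hy Hx H (ltnW Hn) => H'.
by exfalso; apply: Hne; apply: (tle_anti (HF m)).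
Qed.

Definition seg (a b z : LV F) := [/\ inlim alpha z, lle a z & lle z b].

Lemma seg_in a b z : seg a b z -> inlim alpha z.
Proof. by case. Qed.

Lemma lift_d (a b : LV F) n (y : rt_V (F n)) : inlim alpha a -> inlim alpha b -> lle a b ->
  tle (a n) y -> tle y (b n) ->
  forall d, exists z : rt_V (F (d + n)), [/\ tle (a (d + n)) z, tle z (b (d + n)) &
     @pj G alpha d n z = y].
Proof.
move=> Ha Hb Hab Hay Hyb; elim=> [|d [z [H1 H2 H3]]]; first by exists y.
have [||y' [Y1 Y2 Y3]] := @seg_lift _ _ (HF (d + n).+1) (HF (d + n)) (alpha (d + n)) (@aE _) (@aT _)
   (a (d + n).+1) (b (d + n).+1) z (Hab _).
- by rewrite Ha.
- by rewrite Hb.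
exists y'; split => //=; by rewrite Y3.
Qed.


Lemma seg_point (a b : LV F) n (y : rt_V (F n)) : inlim alpha a -> inlim alpha b -> lle a b ->
  tle (a n) y -> tle y (b n) -> exists z, seg a b z /\ z n = y.
Proof.
move=> Ha Hb Hab Hay Hyb.
pose P j (z : G j) := [/\ tle (a j) z, tle z (b j) & @Anch G alpha n (fun q => q = y) j z].
have Pmono : forall j (z : G j.+1), P j.+1 z -> P j (alpha j z).
  move=> j z [H1 H2 H3]; split.
  - by rewrite -Ha; apply: aT.
  - by rewrite -Hb; apply: aT.
  - exact: anch_mono.
have Pne : forall j, exists z : G j, P j z.
  move=> j; case: (ltnP j n) => Hj.
    exists (a j); split; [exact: (tle_refl (HF j))|exact: Hab|exact: anch_lt].
  rewrite -(subnK Hj).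
  have [z [H1 H2 H3]] := lift_d Ha Hb Hab Hay Hyb (j - n).
  by exists z; split => //; apply: anch_pj.
have [u [Hu HP]] := @konig G alpha P Pmono Pne.
exists u; split.
- by split => // j; case: (HP j).
- by case: (HP n) => _ _ H; apply: (anch_thread Hu H).
Qed.

Lemma seg_conn (a b : LV F) : inlim alpha a -> inlim alpha b -> lle a b -> lconnected (seg a b).
Proof.
move=> Ha Hb Hab [A [B [Hcov [Hdis [[a0 Ha0] [[b0 Hb0] [HcA [HcB Hno]]]]]]]].
have HsA : forall z, A z -> seg a b z by move=> z H; apply/Hcov; left.
have HsB : forall z, B z -> seg a b z by move=> z H; apply/Hcov; right.
pose G2 : nat -> finType := fun n => (rt_V (F n) * rt_V (F n))%type.
pose beta2 n (p : G2 n.+1) : G2 n := (alpha n p.1, alpha n p.2).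
pose P2 n (p : G2 n) := [/\ rt_E (F n) p.1 p.2, exists z, A z /\ z n = p.1 &
   exists z, B z /\ z n = p.2].
have Pmono : forall n (p : G2 n.+1), P2 n.+1 p -> P2 n (beta2 n p).
  move=> n p [HE [z [Hz e1]] [z' [Hz' e2]]]; split.
  - exact: aE.
  - by exists z; split => //=; case: (HsA z Hz) => Hi _ _; rewrite -Hi e1.
  - by exists z'; split => //=; case: (HsB z' Hz') => Hi _ _; rewrite -Hi e2.
have Pne : forall n, exists p : G2 n, P2 n p.
  move=> n.
  case: (HsA a0 Ha0) => Hi0 Hl0 Hr0; case: (HsB b0 Hb0) => Hi1 Hl1 Hr1.
  case/(tle_iter (HF n)): (Hr0 n) => l1 e1.
  case/(tle_iter (HF n)): (Hr1 n) => l2 e2.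
  pose f l := iter l (par (HF n)) (b n).
  have Hin : forall l, l <= maxn l1 l2 ->
      (exists z, A z /\ z n = f l) \/ (exists z, B z /\ z n = f l).
    move=> l Hl.
    have H1 : tle (a n) (f l).
      apply: (tle_trans (HF n)) (tle_iter_between (HF n) _ Hl).
      case: (leqP l1 l2) => H12.
        by rewrite -e2; apply: Hl1.
      by rewrite -e1; apply: Hl0.
    have H2 : tle (f l) (b n) by apply: tle_iter_le.
    have [z [Hz e]] := seg_point Ha Hb Hab H1 H2.
    by case/Hcov: Hz => Hz; [left|right]; exists z.
  have HE1 : forall l, rt_E (F n) (f l) (f l.+1).
    by move=> l; rewrite /f iterS (Esym (HF n)) (E_par (HF n)).
  case: (leqP l1 l2) => H12.
    have HX : exists z, A z /\ z n = f l1 by exists a0.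
    have HY : exists z, B z /\ z n = f l2 by exists b0.
    have Hc : forall l, l1 <= l <= l2 -> (exists z, A z /\ z n = f l) \/ (exists z, B z /\ z n = f l).
      move=> l /andP [_ Hl]; apply: Hin; by rewrite (maxn_idPr H12).
    have [l [_ HXl HYl]] := cross H12 HX HY Hc.
    case: HYl => [HYl|[_ HYl]].
      by exists (f l, f l); split => //; apply: (Erefl (HF n)).
    by exists (f l, f l.+1); split => //=; apply: HE1.
  have H21 := ltnW H12.
  have HX : exists z, B z /\ z n = f l2 by exists b0.
  have HY : exists z, A z /\ z n = f l1 by exists a0.
  have Hc : forall l, l2 <= l <= l1 -> (exists z, B z /\ z n = f l) \/ (exists z, A z /\ z n = f l).
    move=> l /andP [_ Hl]; case: (Hin l); rewrite ?(maxn_idPl H21) // => H; by [right|left].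
  have [l [_ HXl HYl]] := cross H21 HX HY Hc.
  case: HYl => [HYl|[_ HYl]].
    by exists (f l, f l); split => //; apply: (Erefl (HF n)).
  by exists (f l.+1, f l); split => //=; rewrite (Esym (HF n)); apply: HE1.
have [u [Hu HP]] := @konig G2 beta2 P2 Pmono Pne.
pose pa : LV F := fun n => (u n).1.
pose qa : LV F := fun n => (u n).2.
have Hpa : inlim alpha pa by move=> n; rewrite /pa -(Hu n).
have Hqa : inlim alpha qa by move=> n; rewrite /qa -(Hu n).
apply: (Hno pa qa); last by move=> n; case: (HP n).
- apply: HcA.
    split => // n; case: (HP n) => _ [z [Hz e]] _; case: (HsA z Hz) => _ H1 H2;
      by rewrite /pa -e.
  move=> n; case: (HP n) => _ [z [Hz e]] _; exists z; split => // m Hm.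
  by apply: (down_eq (seg_in (HsA z Hz)) Hpa e).
- apply: HcB.
    split => // n; case: (HP n) => _ _ [z [Hz e]]; case: (HsB z Hz) => _ H1 H2;
      by rewrite /qa -e.
  move=> n; case: (HP n) => _ _ [z [Hz e]]; exists z; split => // m Hm.
  by apply: (down_eq (seg_in (HsB z Hz)) Hqa e).
Qed.

Lemma seg_arc (a b : LV F) : inlim alpha a -> inlim alpha b -> lle a b -> a <> b ->
  is_arc (seg a b).
Proof.
move=> Ha Hb Hab Hne; split; first exact: seg_conn.
exists a, b; split => //.
- by split => //; apply: lle_refl.
- by split => //; apply: lle_refl.
move=> x0 Hx0 Hxa Hxb HC; apply: HC.
case: Hx0 => Hi0 Hl0 Hr0.
exists (fun z => (seg a b z /\ z <> x0) /\ lle z x0), (fun z => (seg a b z /\ z <> x0) /\ lle x0 z).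
split.
  move=> z; split; last by case=> [[]|[]].
  move=> [Hz Hzx]; case: (Hz) => Hi _ Hr.
  by case: (lle_total Hi Hi0 Hr Hr0) => H; [left|right].
split; first by move=> z [[[_ ne] H1] [_ H2]]; apply: ne; apply: lle_anti.
split.
  exists a; split => //; split; last by move=> e; apply: Hxa.
  by split => //; apply: lle_refl.
split.
  exists b; split => //; split; last by move=> e; apply: Hxb.
  by split => //; apply: lle_refl.
split.
  move=> z [Hz Hzx] Happ; split => //.
  case: (Hz) => Hi _ Hr.
  case: (lle_total Hi Hi0 Hr Hr0) => // H.
  have [n Hn] := neq_ex Hzx.
  have [y [[_ Hy] Hyapp]] := Happ n.
  have e := Hyapp n (leqnn n).
  by exfalso; apply: Hn; apply: (tle_anti (HF n)) (H n); rewrite -e.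
split.
  move=> z [Hz Hzx] Happ; split => //.
  case: (Hz) => Hi _ Hr.
  case: (lle_total Hi Hi0 Hr Hr0) => // H.
  have [n Hn] := neq_ex Hzx.
  have [y [[_ Hy] Hyapp]] := Happ n.
  have e := Hyapp n (leqnn n).
  by exfalso; apply: Hn; apply: (tle_anti (HF n)) => //; rewrite -e; apply: Hy.
move=> y z [[Hy Hyx] Hyl] [[Hz Hzx] Hzl] HE.
have [n1 Hn1] := neq_ex Hyx.
have [n2 Hn2] := neq_ex Hzx.
pose N := maxn n1 n2.
have Hy' : y N <> x0 N by apply: (up_neq (seg_in Hy) Hi0 Hn1); apply: leq_maxl.
have Hz' : x0 N <> z N by move=> e; apply: (up_neq (seg_in Hz) Hi0 Hn2 (leq_maxr n1 n2)).
by move/negP: (tle_between (HF N) (Hyl N) (Hzl N) Hy' Hz'); apply.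
Qed.


Lemma order2 (A0 A1 : LV F -> Prop) v : (forall x, A0 x -> inlim alpha x) ->
  (forall x, A1 x -> inlim alpha x) -> is_arc A0 -> is_arc A1 -> A0 v -> A1 v ->
  (forall x, A0 x -> A1 x -> x = v) -> order_ge alpha v 2.
Proof.
move=> H0 H1 Ha0 Ha1 Hv0 Hv1 Hint.
exists (fun i => if i == 0 then A0 else A1) => i Hi.
case: i Hi => [|[|i]] // _; split => //.
- by move=> j Hj Hij x; case: j Hj Hij => [|[|j]] // _ _ Ha Hb; apply: Hint.
- by move=> j Hj Hij x; case: j Hj Hij => [|[|j]] // _ _ Ha Hb; apply: Hint.
Qed.

Local Unset Implicit Arguments.
Variable Fam : rtree -> Prop.
Variable Fix : fixed_maps.
Local Set Implicit Arguments.
Hypothesis HFam : proj_fraisse_family Fam Fix.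
Hypothesis Hconf : forall S T f, Fix S T f -> confluent f.
Hypothesis Hsex : forall T (a b c : rt_V T), Fam T -> a != b -> rt_E T a b -> tle a b ->
      (c = a \/ c = b) ->
      exists S (s : rt_V S -> rt_V T), [/\ Fam S, Fix S T s & is_split s a b c].
Hypothesis HFn : forall n, Fam (F n).
Hypothesis Halpha : forall n, Fix (F n.+1) (F n) (alpha n).
Hypothesis Hext : forall A B (f : LV F -> rt_V A) (g : rt_V B -> rt_V A),
          admissible Fix alpha f -> Fix B A g ->
          exists h : LV F -> rt_V B, admissible Fix alpha h /\
            forall x, inlim alpha x -> f x = g (h x).

Lemma Htree T : Fam T -> is_rtree T.
Proof. by case: HFam => H _; apply: H. Qed.
Lemma HFixepi S T f : Fix S T f -> [/\ Fam S, Fam T & is_epi f].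
Proof. by case: HFam => _ [H _]; apply: H. Qed.
Lemma Hcomp R S T (f : rt_V S -> rt_V T) (g : rt_V R -> rt_V S) :
  Fix S T f -> Fix R S g -> Fix R T (f \o g).
Proof. by case: HFam => _ [_ [_ [_ [H _]]]]; apply: H. Qed.
Lemma Hid T : Fam T -> Fix T T id.
Proof. by case: HFam => _ [_ [_ [H _]]]; apply: H. Qed.

Lemma epiE S T (f : rt_V S -> rt_V T) a b : is_epi f -> rt_E S a b -> rt_E T (f a) (f b).
Proof. by case=> H _ _ _ _; apply: H. Qed.
Lemma epiT S T (f : rt_V S -> rt_V T) a b : is_epi f -> tle a b -> tle (f a) (f b).
Proof. by case=> _ _ _ _ H; apply: H. Qed.
Lemma epiR S T (f : rt_V S -> rt_V T) : is_epi f -> f (rt_root S) = rt_root T.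
Proof. by case. Qed.

Lemma proj_adm m : admissible Fix alpha (fun z : LV F => z m).
Proof. by exists m, id; split => //; apply: Hid. Qed.

Lemma split_step m (a b : rt_V (F m)) (v w : LV F) : inlim alpha v -> inlim alpha w ->
  limE v w -> a != b -> rt_E (F m) a b -> tle a b -> v m = a -> w m = b \/ (v m = b /\ w m = a) ->
  True.
Proof. by []. Qed.

Lemma key v w : inlim alpha v -> inlim alpha w -> w <> v -> limE v w -> order_ge alpha v 2.
Proof.
move=> Hv Hw Hwv Hvw.
have [m Hm] : exists m, v m <> w m by apply: neq_ex => e; apply: Hwv.
have Hm' : v m != w m by apply/eqP.
case: (adj_tle (HF m) (Hvw m)) => Hdir.
-
  have Hvw' : rt_E (F m) (v m) (w m) := Hvw m.
  have [S [s [HSfam HsFix Hsplit]]] := Hsex (HFn m) Hm' Hvw' Hdir (or_introl erefl).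
  case: Hsplit => _ _ _ _ [x [i [Hinj [Hcov [Hix [Hroot [HEi [HExi [HEix [HExx [Hsi Hsx]]]]]]]]]]].
  have [h [[k [h' [Hh'Fix Hh]]] Hfac]] := Hext (proj_adm m) HsFix.
  case: (HFixepi Hh'Fix) => _ _ Hh'epi.
  have Hsv : s (h' (v k)) = v m by rewrite -Hh // -Hfac.
  have Hsw : s (h' (w k)) = w m by rewrite -Hh // -Hfac.
  have Hhw : h' (w k) = i (w m).
    case: (Hcov (h' (w k))) => [e|[u e]].
      by exfalso; apply: Hm; rewrite -Hsw e Hsx.
    by rewrite -e -Hsw -e Hsi.
  have Hhv : h' (v k) = x.
    case: (Hcov (h' (v k))) => [//|[u e]].
    have eu : u = v m by rewrite -Hsv -e Hsi.
    have := epiE Hh'epi (Hvw k); rewrite Hhw -e eu => /HEi [_ []].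
    by left.
  pose r : LV F := fun n => rt_root (F n).
  have Hr : inlim alpha r by move=> n; rewrite /r (epiR (Hepi n)).
  have Hrv : r <> v.
    move=> e; apply: (Hix (rt_root (F m))).
    by rewrite -Hroot -Hhv -e /r (epiR Hh'epi).
  have Hlvw : lle v w := adj_lle Hv Hw Hvw Hm Hdir.
  have Hlrv : lle r v by move=> n; apply: (tle_root (HF n)).
  apply: (@order2 (seg v w) (seg r v)).
  - by move=> z; case.
  - by move=> z; case.
  - by apply: seg_arc => // e; apply: Hwv.
  - by apply: seg_arc.
  - by split => //; apply: lle_refl.
  - by split => //; apply: lle_refl.
  - by move=> z [_ H1 _] [_ _ H2]; apply: lle_anti.
-
  have Hwv' : rt_E (F m) (w m) (v m) by rewrite (Esym (HF m)); apply: Hvw.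
  have Hm2 : w m != v m by rewrite eq_sym.
  have [S [s [HSfam HsFix Hsplit]]] := Hsex (HFn m) Hm2 Hwv' Hdir (or_intror erefl).
  case: Hsplit => _ _ _ _ [x [i [Hinj [Hcov [Hix [Hroot [HEi [HExi [HEix [HExx [Hsi Hsx]]]]]]]]]]].
  have [h [[k [h' [Hh'Fix Hh]]] Hfac]] := Hext (proj_adm m) HsFix.
  case: (HFixepi Hh'Fix) => _ _ Hh'epi.
  case: (HFixepi HsFix) => _ _ Hsepi.
  have HS := Htree HSfam.
  have Hsv : s (h' (v k)) = v m by rewrite -Hh // -Hfac.
  have Hsw : s (h' (w k)) = w m by rewrite -Hh // -Hfac.
  have Hhw : h' (w k) = i (w m).
    case: (Hcov (h' (w k))) => [e|[u e]].
      by exfalso; apply: Hm; rewrite -Hsw e Hsx.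
    by rewrite -e -Hsw -e Hsi.
  have Hhv : h' (v k) = x.
    case: (Hcov (h' (v k))) => [//|[u e]].
    have eu : u = v m by rewrite -Hsv -e Hsi.
    have := epiE Hh'epi (Hvw k); rewrite Hhw -e eu => /HEi [_ []].
    by right.
  have Hnxw : ~ tle x (i (w m)).
    move=> H; have := epiT Hsepi H; rewrite Hsx Hsi => H'.
    by apply: Hm; apply: (tle_anti (HF m)).
  have Hxv : tle x (i (v m)).
    have Hx1 : x != i (v m) by apply/eqP => e; apply: (Hix (v m)).
    have Hx2 : x != i (w m) by apply/eqP => e; apply: (Hix (w m)).
    have E1 : rt_E S x (i (v m)) by apply/HExi; right.
    have E2 : rt_E S x (i (w m)) by apply/HExi; left.
    case: (adj_par HS E1 Hx1) => e1; last by rewrite e1; apply: tle_par_self.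
    case: (adj_par HS E2 Hx2) => e2.
      by exfalso; apply: Hm; apply: Hinj; rewrite e1 e2.
    by exfalso; apply: Hnxw; rewrite e2; apply: tle_par_self.
  have Hconfl : forall d, exists y : rt_V (F (d + k)),
      tle (v (d + k)) y /\ h' (@pj G alpha d k y) <> x.
    move=> d.
    pose g := fun z : rt_V (F (d + k)) => h' (@pj G alpha d k z).
    have HgFix : Fix (F (d + k)) S g.
      rewrite /g; elim: d {g} => [|d IH] //.
      exact: (Hcomp IH (Halpha (d + k))).
    case: (HFixepi HgFix) => _ _ Hgepi.
    have Hgv : g (v (d + k)) = x by rewrite /g -(@thread_pj G alpha v d k Hv).
    have Hgw : g (w (d + k)) = i (w m) by rewrite /g -(@thread_pj G alpha w d k Hw).
    have Hne : v (d + k) != w (d + k).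
      by apply/eqP => e; apply: (Hix (w m)); rewrite -Hgw -e.
    have Hpar : w (d + k) = par (HF (d + k)) (v (d + k)).
      case: (adj_par (HF _) (Hvw (d + k)) Hne) => // e.
      exfalso; apply: Hnxw; rewrite -Hgv -Hgw; apply: (epiT Hgepi).
      by rewrite e; apply: tle_par_self.
    pose Q := upset HS x.
    have HQ : fconnected Q := @upset_conn S HS x.
    pose P' := g @^-1: Q.
    have HvP : v (d + k) \in P' by rewrite inE Hgv; apply/upsetP; apply: tle_refl.
    have [K [HK HvK]] := comp_ex (HF (d + k)) HvP.
    have HgK := Hconf HgFix HQ HK.
    have : i (v m) \in g @: K by rewrite HgK; apply/upsetP.
    case/imsetP => y HyK ey.
    case: (HK) => HKP _ HKc _.
    exists y; split; last by rewrite -/(g y) -ey => e; apply: (Hix (v m)).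
    apply: (@conn_up _ (HF (d + k)) _ _ HKc HvK) => //.
    apply/negP; rewrite -Hpar => HwK.
    have := subsetP HKP _ HwK; rewrite inE Hgw => /upsetP; exact: Hnxw.
  pose P j (z : G j) := tle (v j) z /\ @Anch G alpha k (fun q => h' q <> x) j z.
  have Pmono : forall j (z : G j.+1), P j.+1 z -> P j (alpha j z).
    move=> j z [H1 H2]; split; last exact: anch_mono.
    by rewrite -Hv; apply: aT.
  have Pne : forall j, exists z : G j, P j z.
    move=> j; case: (ltnP j k) => Hj.
      by exists (v j); split; [exact: (tle_refl (HF j))|exact: anch_lt].
    rewrite -(subnK Hj).
    have [y [H1 H2]] := Hconfl (j - k).
    by exists y; split => //; apply: anch_pj.
  have [u [Hu HP]] := @konig G alpha P Pmono Pne.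
  have Hlvu : lle v u by move=> n; case: (HP n).
  have Hvu : v <> u.
    move=> e; case: (HP k) => _ H; apply: (anch_thread Hu H).
    by rewrite -e.
  have Hlwv : lle w v.
    apply: (adj_lle Hw Hv _ (fun e => Hm (esym e)) Hdir).
    by move=> n; rewrite (Esym (HF n)); apply: Hvw.
  apply: (@order2 (seg w v) (seg v u)).
  - by move=> z; case.
  - by move=> z; case.
  - by apply: seg_arc.
  - by apply: seg_arc.
  - by split => //; apply: lle_refl.
  - by split => //; apply: lle_refl.
  - by move=> z [_ _ H1] [_ H2 _]; apply: lle_anti.
Qed.

End Limit.

Theorem theorem7p7 (Fam : rtree -> Prop) (Fix : fixed_maps)
  (F : nat -> rtree) (alpha : forall n, rt_V (F n.+1) -> rt_V (F n)) :
  proj_fraisse_family Fam Fix ->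
  (forall S T f, Fix S T f -> confluent f) ->
  (forall S T (s : rt_V S -> rt_V T) a b c,
      Fam S -> Fam T -> is_split s a b c -> Fix S T s) ->
  (forall T (a b c : rt_V T), Fam T -> a != b -> rt_E T a b -> tle a b ->
      (c = a \/ c = b) ->
      exists S (s : rt_V S -> rt_V T), [/\ Fam S, Fix S T s & is_split s a b c]) ->
  is_proj_fraisse_limit Fam Fix alpha ->
  forall v : LV F, ~ isolated_end_vertex alpha v.
Proof.
move=> HFam Hconf Hsfix Hsex [HFn Halpha Hadm Hext] v [[Hv _ Hn2] [w [Hw Hwv Hvw]]].
apply: Hn2.
have HF : forall n, is_rtree (F n) by move=> n; exact: (proj1 HFam) _ (HFn n).
have Hepi : forall n, is_epi (alpha n).
  by move=> n; case: ((proj1 (proj2 HFam)) _ _ _ (Halpha n)).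
exact: (@key F alpha HF Hepi Fam Fix HFam Hconf Hsex HFn Halpha Hext v w Hv Hw Hwv Hvw).
Qed.
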